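(* Let $k\ge 1$ be an integer with $4\nmid k$ such that $\mathcal{D}:=(k^2+4)/\gcd(2,k)^2$ is squarefree, let $\alpha=\frac{k+\sqrt{k^2+4}}{2}$, $\beta=\frac{k-\sqrt{k^2+4}}{2}$, let $p\ge 3$ be a prime and $\mathcal{F}_p(x)=x^{2p}-kx^p-1$. Then $\mathcal{F}_p(\beta)\equiv 0 \pmod{p^2}$ if and only if $\mathcal{F}_p(\alpha)\equiv 0\pmod{p^2}$.
   Context: Congruences are taken in the ring of algebraic integers of $\mathbb{Q}(\sqrt{k^2+4})$: $x\equiv y\pmod{m}$ means $(x-y)/m$ is an algebraic integer. *)

(* Defs.v *)
From mathcomp Require Import all_boot all_order all_algebra all_field.
Set Implicit Arguments. Unset Strict Implicit. Unset Printing Implicit Defensive.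
Import GRing.Theory Num.Theory.
Local Open Scope ring_scope.

Definition squarefree (n : nat) : Prop :=
  forall d : nat, (1 < d)%N -> ~~ (d * d %| n)%N.

Definition Fp (k p : nat) (x : algC) : algC :=
  x ^+ (2 * p) - k%:R * x ^+ p - 1.

Definition alphak (k : nat) : algC := (k%:R + sqrtC ((k ^ 2 + 4)%N)%:R) / 2.
Definition betak (k : nat) : algC := (k%:R - sqrtC ((k ^ 2 + 4)%N)%:R) / 2.

(* Main.v *)
Require Import Defs.
From mathcomp Require Import all_boot all_order all_algebra all_field.
From mathcomp Require Import ring.
Import GRing.Theory Num.Theory.
Local Open Scope ring_scope.
Lemma Fp_swap k p (x y : algC) : odd p -> x * y = -1 ->
  Fp k p y = - (y ^+ (2 * p)) * Fp k p x.
Proof.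
move=> op hxy; rewrite /Fp.
have hp : x ^+ p * y ^+ p = -1 by rewrite -exprMn hxy -signr_odd op expr1.
rewrite !(mulnC 2) !exprM.
move: (x ^+ p) (y ^+ p) hp => a b hab.
have -> : - b ^+ 2 * (a ^+ 2 - k%:R * a - 1) = -(a*b)^+2 + k%:R * b * (a * b) + b ^+ 2 by ring.
rewrite hab; ring.
Qed.
Lemma sq k : exists s : algC, s ^+ 2 = k%:R ^+ 2 + 4 /\ alphak k = (k%:R + s) / 2 /\ betak k = (k%:R - s) / 2.
Proof.
exists (sqrtC ((k ^ 2 + 4)%N)%:R); split; last by [].
by rewrite sqrtCK natrD natrX.
Qed.
Lemma ab k : alphak k * betak k = -1.
Proof.
have [s [h [-> ->]]] := sq k.
have -> : (k%:R + s) / 2 * ((k%:R - s) / 2) = (k%:R ^+ 2 - s ^+ 2) / 4 :> algC.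
  by field.
rewrite h; field; by rewrite ?pnatr_eq0.
Qed.
Lemma a_Aint k (s : algC) : s ^+ 2 = k%:R ^+ 2 + 4 -> (k%:R + s) / 2 \in Aint.
Proof.
move=> h.
apply: (@root_monic_Aint ('X^2 - ((k%:R)%:P * 'X + 1))).
- rewrite rootE !(hornerD, hornerN, hornerXn, hornerCM, hornerX, hornerC); apply/eqP.
  have E : ((k%:R + s) / 2) ^+ 2 - (k%:R * ((k%:R + s) / 2) + 1) = 0 :> algC.
    have -> : ((k%:R + s) / 2) ^+ 2 - (k%:R * ((k%:R + s) / 2) + 1) = (s^+2 - k%:R^+2 - 4) / 4 :> algC.
      by field; rewrite ?pnatr_eq0.
    by rewrite h; ring.
  exact E.
- rewrite monicE lead_coefDl ?lead_coefXn // size_polyN size_polyXn.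
  apply: (leq_ltn_trans (size_polyD _ _)); rewrite gtn_max size_poly1 andbT.
  rewrite mul_polyC; apply: (leq_ltn_trans (size_scale_leq _ _)); by rewrite size_polyX.
- apply/polyOverP => i; rewrite coefB coefD coefCM coefX coefXn coef1.
  by rewrite rpredB ?rpredD ?rpredM ?rpred_nat ?rpred0 ?rpred1 //; case: eqP; rewrite ?rpred0 ?rpred1 ?rpred_nat.
Qed.

Lemma alpha_Aint k : alphak k \in Aint.
Proof. have [s [h [-> _]]] := sq k; exact: a_Aint. Qed.

Lemma beta_Aint k : betak k \in Aint.
Proof.
have [s [h [_ ->]]] := sq k; apply: (@a_Aint k (- s)); by rewrite sqrrN.
Qed.

Theorem lemma3p3 (k p : nat) :
  (1 <= k)%N -> ~~ (4 %| k)%N ->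
  squarefree ((k ^ 2 + 4) %/ (gcdn 2 k) ^ 2)%N ->
  prime p -> (3 <= p)%N ->
  ((Fp k p (betak k) == 0 %[mod (p ^ 2)%N%:R])%A <->
   (Fp k p (alphak k) == 0 %[mod (p ^ 2)%N%:R])%A).
Proof.
move=> _ _ _ pp p3.
have op : odd p.
  by case: (even_prime pp) => // p2; rewrite p2 in p3.
have hab := ab k.
have hba : betak k * alphak k = -1 by rewrite mulrC.
split=> H.
- rewrite (@Fp_swap k p _ _ op hba) -(mulr0 (- alphak k ^+ (2 * p))).
  apply: eqAmodMl; first by rewrite rpredN rpredX // alpha_Aint.
  exact: H.
- rewrite (@Fp_swap k p _ _ op hab) -(mulr0 (- betak k ^+ (2 * p))).
  apply: eqAmodMl; first by rewrite rpredN rpredX // beta_Aint.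
  exact: H.
Qed.
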